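(* Let $G,H$ be real Hilbert spaces, $D\subset G$, and $\lambda_F,\lambda_f>0$. Let $F:G\to H$ be $\lambda_F$-UC on $D$ and let $f:H\to\mathbb{R}$ be $\lambda_f$-PL on $F(D)$. Then for all $x\in D$, \[ \tfrac12\|\nabla(f\circ F)(x)\|^2\ge \lambda_F\lambda_f\bigl((f\circ F)(x)-f_*\bigr), \] where $f_*=\inf_{h\in H}f(h)$.
   Context: For $F:G\to H$ between Hilbert spaces, $\partial F(x)\in\mathcal{L}(G,H)$ is the Fréchet derivative at $x$ and $\partial F(x)^*\in\mathcal{L}(H,G)$ its adjoint; for $f:H\to\mathbb{R}$, $\nabla f(x)\in H$ is the gradient. An operator $B\in\mathcal{L}(H,H)$ is $\lambda$-coercive ($\lambda>0$) if $\langle y,By\rangle\ge\lambda\|y\|^2$ for all $y\in H$. $F$ (differentiable on $D$) is $\lambda$-UC (uniformly conditioned) on $D$ if $\partial F(x)\circ\partial F(x)^*$ is $\lambda$-coercive for every $x\in D$. A function $f:H\to\mathbb{R}$ that is bounded below on $H$ and differentiable on a set $E$ is $\lambda$-PL (Polyak–Łojasiewicz) on $E$, $\lambda>0$, if $\tfrac12\|\nabla f(x)\|^2\ge\lambda(f(x)-f_* )$ for all $x\in E$, where $f_*=\inf_{h\in H}f(h)\in\mathbb{R}$. *)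

(* Defs.v *)
From HB Require Import structures.
From mathcomp Require Import all_boot all_order all_algebra.
From mathcomp Require Import all_classical all_reals all_analysis.
Set Implicit Arguments. Unset Strict Implicit. Unset Printing Implicit Defensive.
Import Order.TTheory GRing.Theory Num.Theory.
Import numFieldNormedType.Exports.
Local Open Scope classical_set_scope.
Local Open Scope ring_scope.

HB.mixin Record NormedModule_isInner (R : realType) V of NormedModule R V := {
  inner : V -> V -> R;
  innerC : forall x y : V, inner x y = inner y x;
  innerDl : forall (a : R) (x y z : V),
      inner (a *: x + y) z = a * inner x z + inner y z;
  inner_norm : forall x : V, inner x x = `|x| ^+ 2
}.

#[short(type="hilbertType")]
HB.structure Definition Hilbert (R : realType) :=
  { V of NormedModule_isInner R V & CompleteNormedModule R V }.

Section Defs.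
Variable R : realType.

Definition is_adjoint (G H : hilbertType R) (B : G -> H) (B' : H -> G) :=
  forall (g : G) (h : H), inner (B g) h = inner g (B' h).

(* The adjoint dF^* (unique when it exists; it always exists for bounded
   linear maps between Hilbert spaces by Riesz). *)
Definition adjoint (G H : hilbertType R) (B : G -> H) : H -> G :=
  get [set B' | is_adjoint B B'].

Definition is_gradient (H : hilbertType R) (f : H -> R^o) (x g : H) :=
  forall h : H, 'd f x h = inner g h.

Definition grad (H : hilbertType R) (f : H -> R^o) (x : H) : H :=
  get [set g | is_gradient f x g].

Definition coercive (H : hilbertType R) (lam : R) (B : H -> H) :=
  forall y : H, lam * `|y| ^+ 2 <= inner y (B y).

Definition UC (G H : hilbertType R) (lam : R) (F : G -> H) (D : set G) :=
  0 < lam /\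
  (forall x, D x -> differentiable F x) /\
  (forall x, D x -> coercive lam ('d F x \o adjoint ('d F x))).

Definition finf (H : hilbertType R) (f : H -> R^o) : R := inf (range f).

Definition PL (H : hilbertType R) (lam : R) (f : H -> R^o) (E : set H) :=
  0 < lam /\
  (exists m : R, forall h, m <= f h) /\
  (forall x, E x -> differentiable f x) /\
  (forall x, E x -> lam * (f x - finf f) <= 2^-1 * `|grad f x| ^+ 2).

End Defs.

(* Main.v *)
Require Import Defs.
From HB Require Import structures.
From mathcomp Require Import all_boot all_order all_algebra.
From mathcomp Require Import all_classical all_reals all_analysis.
From mathcomp Require Import ring lra.
Import Order.TTheory GRing.Theory Num.Theory.
Import numFieldNormedType.Exports.
Local Open Scope classical_set_scope.
Local Open Scope ring_scope.

Section Inner.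
Variables (R : realType) (H : hilbertType R).
Implicit Types x y z : H.

Lemma innerD x y z : inner (x + y) z = inner x z + inner y z.
Proof. by rewrite -[x in LHS]scale1r innerDl mul1r. Qed.
Lemma inner0l z : inner (0 : H) z = 0.
Proof. have := innerD 0 0 z; rewrite addr0 => /(congr1 (fun t => t - inner 0 z)); by rewrite subrr addrK. Qed.
Lemma innerZ a x z : inner (a *: x) z = a * inner x z.
Proof. by rewrite -[a *: x]addr0 innerDl inner0l addr0. Qed.
Lemma innerN x z : inner (- x) z = - inner x z.
Proof. by rewrite -scaleN1r innerZ mulN1r. Qed.
Lemma innerB x y z : inner (x - y) z = inner x z - inner y z.
Proof. by rewrite innerD innerN. Qed.
Lemma innerDr x y z : inner z (x + y) = inner z x + inner z y.
Proof. by rewrite innerC innerD !(innerC z). Qed.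
Lemma inner0r z : inner z (0 : H) = 0.
Proof. by rewrite innerC inner0l. Qed.
Lemma innerZr a x z : inner z (a *: x) = a * inner z x.
Proof. by rewrite innerC innerZ innerC. Qed.
Lemma innerNr x z : inner z (- x) = - inner z x.
Proof. by rewrite innerC innerN innerC. Qed.
Lemma innerBr x y z : inner z (x - y) = inner z x - inner z y.
Proof. by rewrite innerDr innerNr. Qed.

Lemma inner_eq x y : (forall h, inner x h = inner y h) -> x = y.
Proof.
move=> e; apply/eqP; rewrite -subr_eq0 -normr_eq0 -sqrf_eq0 -inner_norm.
by rewrite innerB e subrr.
Qed.

Lemma normD2 x y : `|x + y| ^+ 2 = `|x| ^+ 2 + 2 * inner x y + `|y| ^+ 2.
Proof.
rewrite -!inner_norm innerD !innerDr (innerC y x); ring.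
Qed.
Lemma normB2 x y : `|x - y| ^+ 2 = `|x| ^+ 2 - 2 * inner x y + `|y| ^+ 2.
Proof. by rewrite normD2 innerNr normrN; ring. Qed.


Lemma riesz (phi : H -> R^o) :
  (forall a x y, phi (a *: x + y) = a * phi x + phi y) -> continuous phi ->
  exists g, forall h, phi h = inner g h.
Proof.
move=> lin cont.
have phi0 : phi 0 = 0.
  have := lin 1 0 0; rewrite scale1r addr0 mul1r => /(congr1 (fun t => t - phi 0)).
  by rewrite subrr addrK.
have phiZ a x : phi (a *: x) = a * phi x by rewrite -[a *: x]addr0 lin phi0 addr0.
have phiD x y : phi (x + y) = phi x + phi y by rewrite -[x]scale1r lin mul1r scale1r.
have phiB x y : phi (x - y) = phi x - phi y.
  by rewrite phiD -scaleN1r phiZ mulN1r.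
case: (pselect (exists v, phi v != 0)) => [[v phiv]|nex]; last first.
  exists 0 => h; rewrite inner0l; apply/eqP; apply/negPn/negP => hn.
  by apply: nex; exists h.
pose w := (phi v)^-1 *: v.
have phiw : phi w = 1 by rewrite phiZ mulVf.
pose M := [set h | phi h = 1].
pose S := [set `|h| | h in M].
have S0 : S !=set0 by exists `|w|; exists w.
have Slb : has_lbound S by exists 0 => _ [h _ <-].
pose d := inf S.
have d0 : 0 <= d by apply: lb_le_inf => // _ [h _ <-].
have dle h : phi h = 1 -> d <= `|h|.
  by move=> ph; apply: ge_inf => //; exists h.
have : forall n : nat, exists h, phi h = 1 /\ `|h| < d + n.+1%:R^-1.
  move=> n; have [_ [h Mh <-] hl] := @inf_adherent _ S (n.+1%:R^-1) ltac:(by []) (conj S0 Slb).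
  by exists h.
move=> /choice [hs Hhs].
have par h1 h2 : phi h1 = 1 -> phi h2 = 1 ->
    `|h1 - h2| ^+ 2 <= 2 * `|h1| ^+ 2 + 2 * `|h2| ^+ 2 - 4 * d ^+ 2.
  move=> p1 p2.
  have pm : phi (2^-1 *: (h1 + h2)) = 1.
    by rewrite phiZ phiD p1 p2; field.
  have := dle _ pm; rewrite normrZ ger0_norm ?invr_ge0 // => hm.
  have hm2 : 2 * d <= `|h1 + h2|.
    lra.
  have hm3 : 4 * d ^+ 2 <= `|h1 + h2| ^+ 2.
    have -> : 4 * d ^+ 2 = (2 * d) ^+ 2 by ring.
    by rewrite lerXn2r ?nnegrE ?mulr_ge0.
  have := normD2 h1 h2; have := normB2 h1 h2; lra.
have cau : cauchy (hs @ \oo).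
  apply/cauchy_exP => eps eps0.
  pose del := eps ^+ 2 / (8 * d + 4 + eps ^+ 2).
  have den0 : 0 < 8 * d + 4 + eps ^+ 2 by rewrite ltr_wpDl ?exprn_gt0 // ?addr_gt0 //; lra.
  have del0 : 0 < del by rewrite divr_gt0 ?exprn_gt0.
  have delE : del * (8 * d + 4 + eps ^+ 2) = eps ^+ 2 by rewrite /del mulfVK ?gt_eqF.
  have [N _ HN] := near_infty_natSinv_lt (PosNum del0).
  have eN := HN N (leqnn N).
  exists (hs N); exists N => // n /= Nn.
  rewrite -ball_normE /ball_ /=.
  have en : n.+1%:R^-1 <= N.+1%:R^-1 :> R.
    by rewrite lef_pV2 ?posrE // ler_nat.
  have [p1 l1] := Hhs N; have [p2 l2] := Hhs n.
  have := par _ _ p1 p2.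
  have n0 : 0 < n.+1%:R^-1 :> R by [].
  have a1 := normr_ge0 (hs N); have a2 := normr_ge0 (hs n); have a3 := normr_ge0 (hs N - hs n).
  have {}eN : N.+1%:R^-1 < del := eN.
  set x1 := `|hs N| in l1 a1 *; set x2 := `|hs n| in l2 a2 *.
  set y := `|hs N - hs n| in a3 *.
  set r1 := N.+1%:R^-1 in en l1 eN *; set r2 := n.+1%:R^-1 in en l2 n0 *.
  clearbody x1 x2 y del d r1 r2.
  have b1 : x1 < d + del by lra.
  have b2 : x2 < d + del by lra.
  have c1 : x1 ^+ 2 < (d + del) ^+ 2 by rewrite ltrXn2r ?nnegrE //; lra.
  have c2 : x2 ^+ 2 < (d + del) ^+ 2 by rewrite ltrXn2r ?nnegrE //; lra.
  have dl1 : del < 1.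
    have : del * (8 * d + 4 + eps ^+ 2) < 1 * (8 * d + 4 + eps ^+ 2).
      rewrite delE mul1r; lra.
    by rewrite ltr_pM2r.
  move=> yb.
  have : y ^+ 2 < eps ^+ 2.
    have e2 : 0 < eps ^+ 2 by rewrite exprn_gt0.
    rewrite -delE; nra.
  move=> hy; nra.
have /cvg_ex [u hu] : cvg (hs @ \oo) by apply: cauchy_cvg.
have pu : phi u = 1.
  have h1 : (phi \o hs) @ \oo --> phi u by apply: continuous_cvg => //; apply: cont.
  have e : phi \o hs = fun=> 1 by apply/funext => n /=; case: (Hhs n).
  rewrite e in h1.
  exact: (@cvg_unique R^o (@norm_hausdorff _ _) _ _ (phi u) 1 h1 (@cvg_cst R^o 1 _ _ _)).
have ud : `|u| <= d.
  apply/ler_addgt0Pr => e e0.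
  have e20 : 0 < e / 2 by rewrite divr_gt0.
  have hA : \forall n \near \oo, `|u - hs n| < e / 2 by exact: (@cvgr_dist_lt _ _ _ _ _ hs u hu _ e20).
  have hB := near_infty_natSinv_lt (PosNum e20).
  near \oo => n.
  have A : `|u - hs n| < e / 2 by near: n.
  have B : n.+1%:R^-1 < e / 2 by near: n.
  have [_ C] := Hhs n.
  have T : `|u| <= `|u - hs n| + `|hs n|.
    by rewrite -[X in `|X| <= _](subrK (hs n)) ler_normD.
  set r := n.+1%:R^-1 in B C; clearbody r.
  lra.
have umin h : phi h = 1 -> `|u| <= `|h| by move=> ph; apply: le_trans ud (dle _ ph).
have orth k : phi k = 0 -> inner u k = 0.
  move=> pk.
  have key t : 0 <= 2 * t * inner u k + t ^+ 2 * `|k| ^+ 2.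
    have p : phi (u + t *: k) = 1 by rewrite phiD phiZ pk pu mulr0 addr0.
    have := umin _ p => le.
    have sq : `|u| ^+ 2 <= `|u + t *: k| ^+ 2 by rewrite lerXn2r ?nnegrE.
    move: sq; rewrite normD2 innerZr normrZ exprMn real_normK ?num_real //.
    lra.
  set a := inner u k in key *; set b := `|k| ^+ 2 in key.
  have b0 : 0 <= b by rewrite exprn_ge0.
  pose s := (b + 1)^-1.
  have s0 : 0 < s by rewrite invr_gt0; lra.
  have sb1 : s * (b + 1) = 1 by rewrite /s mulVf // gt_eqF //; lra.
  have sb : s * b = 1 - s by rewrite mulrDr mulr1 in sb1; lra.
  have := key (- a * s).
  clearbody s a b.
  have a2 : 0 <= a ^+ 2 by rewrite sqr_ge0.
  move=> kk.
  have : s * a ^+ 2 * (1 + s) <= 0 by nra.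
  move=> hh; apply/eqP; rewrite -sqrf_eq0 eq_le a2 andbT.
  have ps : 0 < s * (1 + s) by nra.
  nra.
have uu0 : inner u u != 0.
  rewrite inner_norm sqrf_eq0 normr_eq0; apply/eqP => u0.
  by move: pu; rewrite u0 phi0 => /eqP; rewrite eq_sym oner_eq0.
exists ((inner u u)^-1 *: u) => h.
have pk : phi (h - phi h *: u) = 0 by rewrite phiB phiZ pu mulr1 subrr.
have := orth _ pk; rewrite innerBr innerZr => /eqP; rewrite subr_eq0 => /eqP e.
by rewrite innerZ e mulrCA mulVf // mulr1.
Unshelve. all: by end_near. Qed.
End Inner.

Theorem lemma2 (R : realType) (G H : hilbertType R) (D : set G)
    (lamF lamf : R) (F : G -> H) (f : H -> R^o) :
  0 < lamF -> 0 < lamf ->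
  UC lamF F D -> PL lamf f (F @` D) ->
  forall x, D x ->
    lamF * lamf * ((f \o F) x - finf f) <= 2^-1 * `|grad (f \o F) x| ^+ 2.
Proof.
move=> lF lf [_ [dF coer]] [_ [_ [df pl]]] x Dx.
have Dy : (F @` D) (F x) by exists x.
have dFx := dF x Dx; have dfy := df _ Dy.
have gex : exists g, is_gradient f (F x) g.
  have lin : forall a u v, 'd f (F x) (a *: u + v) = a * 'd f (F x) u + 'd f (F x) v.
    by move=> a u v; rewrite linearP.
  have [g hg] := @riesz R H ('d f (F x)) lin (diff_continuous dfy).
  by exists g.
have gg : is_gradient f (F x) (grad f (F x)) := getPex gex.
set g := grad f (F x) in gg *.
set L := 'd F x.
have aex : exists B', is_adjoint L B'.
  case: (pselect (exists B', is_adjoint L B')) => // nex.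
  have Aeq : adjoint L = point.
    by apply: getPN => B' hB; apply: nex; exists B'.
  have c := coer x Dx; rewrite -/L Aeq in c.
  have triv (y0 : H) : y0 = 0.
    have c1 := c y0; have c2 := c (- y0).
    rewrite /= normrN innerN in c2.
    have n0 : lamF * `|y0| ^+ 2 <= 0 by lra.
    have : `|y0| ^+ 2 <= 0 by rewrite pmulr_rle0 in n0.
    have := sqr_ge0 `|y0|.
    move=> h1 h2; apply/eqP; rewrite -normr_eq0 -sqrf_eq0 eq_le h2 h1.
    done.
  exists (fun=> 0) => g0 h; rewrite (triv h) inner0r.
  by rewrite inner0r.
have hA : is_adjoint L (adjoint L) := getPex aex.
set A := adjoint L in hA *.
have gc : is_gradient (f \o F) x (A g).
  move=> h; rewrite diff_comp // /= gg (innerC g) hA innerC //.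
have e : grad (f \o F) x = A g.
  apply: inner_eq => h.
  have gg2 : is_gradient (f \o F) x (grad (f \o F) x).
    by apply: getPex; exists (A g).
  by rewrite -gg2 gc.
rewrite e.
have c := coer x Dx g; rewrite /= -/L -/A in c.
have nA : `|A g| ^+ 2 = inner g (L (A g)) by rewrite -inner_norm -hA innerC.
have p := pl _ Dy; rewrite -/g in p.
have := ler_wpM2l (ltW lF) p.
rewrite /= -nA in c.
set X := f (F x) - finf f in p *.
move=> q.
have -> : lamF * lamf * X = lamF * (lamf * X) by rewrite mulrA.
nra.
Qed.
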